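(* Let $H$ be a graph with $n$ vertices and at least $n+2$ edges. Then $H$ contains a cycle of length at most $\frac{n}{2}+1$.
   Context: Graphs may contain loops and parallel edges; a loop is a cycle of length 1 and two parallel edges form a cycle of length 2. *)

(* Defs.v *)
From mathcomp Require Import all_boot.
Set Implicit Arguments. Unset Strict Implicit. Unset Printing Implicit Defensive.

(* A multigraph (loops and parallel edges allowed): finite vertex type V,
   finite edge type E, and each edge has an (unordered) pair of endpoints. *)
Definition joins (V E : finType) (ends : E -> V * V) (e : E) (x y : V) : bool :=
  (ends e == (x, y)) || (ends e == (y, x)).

(* A cycle of length k >= 1: distinct vertices v_0..v_{k-1} and distinct edges
   e_0..e_{k-1} with e_i joining v_i and v_{i+1 mod k}.
   k = 1 is a loop, k = 2 is a pair of parallel edges. *)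
Definition has_cycle_of_length (V E : finType) (ends : E -> V * V) (k : nat) : Prop :=
  0 < k /\
  exists (v : 'I_k -> V) (e : 'I_k -> E),
    injective v /\ injective e /\
    forall i : 'I_k, joins ends (e i) (v i) (v (ordS i)).

(* Main.v *)
Require Import Defs.
From mathcomp Require Import all_boot.
From mathcomp Require Import zify.

Set Implicit Arguments. Unset Strict Implicit. Unset Printing Implicit Defensive.

Section Pth.
Variables (T : eqType) (r : rel T).
Definition pth (s : seq T) := if s is x :: p then path r x p else true.

Lemma pth_cat s1 z s2 : pth (s1 ++ z :: s2) = pth (rcons s1 z) && pth (z :: s2).
Proof.
case: s1 => [|a s1] /=; first by [].
by rewrite -cat_rcons cat_path last_rcons.
Qed.

Lemma pth_catl s1 s2 : pth (s1 ++ s2) -> pth s1.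
Proof. by case: s1 => [|a s1] //=; rewrite cat_path => /andP[]. Qed.

Lemma pth_catr s1 s2 : pth (s1 ++ s2) -> pth s2.
Proof.
case: s1 => [|a s1] //=; rewrite cat_path => /andP[_].
by case: s2 => [|b s2] //= /andP[].
Qed.

Hypothesis rsym : symmetric r.

Lemma pth_rev s : pth (rev s) = pth s.
Proof.
case: s => [|x p] //=.
rewrite [x :: p]lastI rev_rcons /= rev_path.
by apply: eq_path => a b; rewrite rsym.
Qed.

End Pth.

Lemma pth_sub (T : eqType) (r r' : rel T) s : subrel r r' -> pth r s -> pth r' s.
Proof. by case: s => [|x p] //= H; apply: sub_path. Qed.

Lemma valS k (i : 'I_k) : val (ordS i) = if i.+1 == k then 0 else i.+1.
Proof.
rewrite /=; case: eqP => [->|ne]; first by rewrite modnn.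
rewrite modn_small //; have := ltn_ord i; lia.
Qed.

Lemma uniq_count (T : eqType) (s t : seq T) : uniq t ->
  (forall z, count_mem z s <= count_mem z t) -> uniq s.
Proof.
move=> Ht H; apply: count_mem_uniq => z; have := H z; rewrite (count_uniq_mem z Ht).
case: (boolP (z \in s)) => hz.
  have : 0 < count_mem z s by rewrite -has_count has_pred1.
  by case: (z \in t) => /=; lia.
by move/count_memPn: hz => ->.
Qed.

Lemma splitE (T : eqType) (z : T) s : z \in s -> exists s1 s2, s = s1 ++ z :: s2.
Proof. by case/splitPr => s1 s2; exists s1, s2. Qed.

Lemma rev_pathform (T : Type) (x y : T) w : rev (x :: rcons w y) = y :: rcons (rev w) x.
Proof. by rewrite rev_cons rev_rcons. Qed.

Ltac cnt_lia := repeat match goal with H : _ |- _ => clear H end; intros; lia.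

Ltac sz_lia := repeat match goal with H : _ |- _ => clear H end; intros; lia.

Definition pairsOf (T : Type) (s : seq T) := zip s (behead s).

Lemma pairs_mem (T : eqType) (s1 s2 : seq T) a b : (a, b) \in pairsOf (s1 ++ a :: b :: s2).
Proof.
rewrite /pairsOf; elim: s1 => [|c s1 IH] /=; first by rewrite inE eqxx.
by case: s1 IH => [|d s1] IH /=; rewrite inE IH orbT.
Qed.

Lemma size_pairsOf (T : Type) (s : seq T) : size (pairsOf s) = (size s).-1.
Proof. rewrite /pairsOf size_zip size_behead; case: s => //= _ s; apply/minn_idPr; exact: leqnSn. Qed.

Lemma split2 (T : eqType) (x y : T) s : x \in s -> y \in s -> x != y ->
  (exists c1 d1 d2, s = c1 ++ x :: d1 ++ y :: d2) \/
  (exists c1 d1 d2, s = c1 ++ y :: d1 ++ x :: d2).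
Proof.
move=> /splitE[s1 [s2 ->]]; rewrite mem_cat inE => /orP[].
  by move=> /splitE[t1 [t2 ->]] _; right; exists t1, t2, s2; rewrite -catA.
case/orP => [/eqP->|]; first by rewrite eqxx.
by move=> /splitE[t1 [t2 ->]] _; left; exists s1, t1, t2.
Qed.

Section Core.
Variables (V E : finType) (ends : E -> V * V).
Local Notation joins := (joins ends).

Lemma joinsC e x y : joins e x y = joins e y x.
Proof. by rewrite /joins orbC. Qed.

Definition adjF (F : {set E}) x y := [exists e in F, joins e x y].
Definition adj := adjF setT.

Lemma adjF_sym F : symmetric (adjF F).
Proof. by move=> x y; apply/existsP/existsP => -[e He]; exists e; rewrite joinsC. Qed.

Lemma adjF_adj F : subrel (adjF F) adj.
Proof. by move=> x y /existsP[e /andP[_ He]]; apply/existsP; exists e; rewrite in_setT. Qed.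

Definition goodcyc (s : seq V) := [&& 2 < size s, uniq s & cycle adj s].

Lemma goodcyc_has s : goodcyc s -> has_cycle_of_length ends (size s).
Proof.
case: s => [|x0 p] // /and3P[Hs Hu Hc].
set k := size (x0 :: p).
split; first by [].
pose v (i : 'I_k) := nth x0 (x0 :: p) i.
have Hadj: forall i : 'I_k, adj (v i) (v (ordS i)).
  move=> i; move/(pathP x0): Hc => /(_ i).
  rewrite size_rcons -rcons_cons !nth_rcons /v valS /=.
  have hi := ltn_ord i; rewrite /k /= in hi.
  rewrite hi; case: (ltnP i (size p)) => h.
    have -> : (i.+1 == k) = false. rewrite /k /=. apply/eqP. move: (nat_of_ord i) h => j hj; lia.
    by apply.
  have ei: val i = size p by apply/anti_leq; rewrite -ltnS hi h.
  rewrite if_same /= ei /k /= eqxx /=; by apply.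
have [e0 _] : exists e0 : E, true.
  by case/existsP: (Hadj ord0) => e _; exists e.
pose e (i : 'I_k) := odflt e0 [pick f | joins f (v i) (v (ordS i))].
have He : forall i, joins (e i) (v i) (v (ordS i)).
  move=> i; rewrite /e; case: pickP => [f -> //|H].
  by case/existsP: (Hadj i) => f /andP[_ Hf]; rewrite H in Hf.
have vinj : injective v.
  move=> i j /eqP; rewrite /v nth_uniq //; by move/eqP/val_inj.
exists v, e; split => //; split => //.
move=> i j Eij; have Hi := He i; have Hj := He j; rewrite Eij in Hi.
move: Hi Hj; rewrite /joins.
case/orP => /eqP ->; case/orP => /eqP [] h1 h2.
- exact: vinj.
- exfalso; have h3 : j = ordS i by apply: vinj.
  have h4 : i = ordS j by apply: vinj.
  have : val i = val (ordS (ordS i)) by rewrite -h3 -h4.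
  rewrite !valS; have := ltn_ord i; rewrite /k /= in Hs *.
  case: ifP => [/eqP|_]; case: ifP => /=; lia.
- exfalso; have h3 : j = ordS i by apply: vinj.
  have h4 : i = ordS j by apply: vinj.
  have : val i = val (ordS (ordS i)) by rewrite -h3 -h4.
  rewrite !valS; have := ltn_ord i; rewrite /k /= in Hs *.
  case: ifP => [/eqP|_]; case: ifP => /=; lia.
- exact: vinj.
Qed.


Hypothesis noloop : forall e, (ends e).1 != (ends e).2.
Hypothesis nopar : forall e e' x y, joins e x y -> joins e' x y -> e = e'.

Lemma noadj_self F u : ~~ adjF F u u.
Proof.
apply/existsP => -[e /andP[_]]; rewrite /joins orbb => /eqP He.
by have := noloop e; rewrite He eqxx.
Qed.

Definition inc (u : V) := [set e | ((ends e).1 == u) || ((ends e).2 == u)].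

Lemma two_nbrs F u : 1 < #|F :&: inc u| ->
  exists o1 o2, [/\ o1 != o2, adjF F u o1 & adjF F u o2].
Proof.
move/card_gt1P => [e1 [e2 [H1 H2 Hne]]].
pose oth e := if (ends e).1 == u then (ends e).2 else (ends e).1.
have Ho : forall e, e \in F :&: inc u -> joins e u (oth e).
  move=> e; rewrite !inE => /andP[_]; rewrite /oth /joins.
  case: (ends e) => a b /=; case: eqP => [->|ne] /=; first by rewrite eqxx.
  by move=> /eqP ->; rewrite eqxx orbT.
exists (oth e1), (oth e2); split.
- apply/eqP => E12; apply: (negP Hne); apply/eqP. have J2 := Ho _ H2; rewrite -E12 in J2; exact: (nopar (Ho _ H1) J2).
- apply/existsP; exists e1; move: (H1); rewrite inE => /andP[-> _]; exact: Ho.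
- apply/existsP; exists e2; move: (H2); rewrite inE => /andP[-> _]; exact: Ho.
Qed.

Lemma adjF_in (W : {set V}) (F : {set E}) (x y : V) : (forall e, e \in F -> ((ends e).1 \in W) && ((ends e).2 \in W)) ->
  adjF F x y -> (x \in W) && (y \in W).
Proof.
move=> HF /existsP[e /andP[eF]]; have := HF e eF; rewrite /joins.
by case: (ends e) => a b /= /andP[ha hb] /orP[] /eqP [<- <-]; rewrite ha hb.
Qed.

Definition earc (W K : {set V}) (F : {set E}) :=
  (exists s, goodcyc s /\ size s <= #|W :\: K|.+1) \/
  (exists x y w, [/\ x \in K, y \in K, x != y, uniq w &
     all (fun z => z \in W :\: K) w && path (adjF F) x (rcons w y)]).

Lemma earc_mono (W W' K : {set V}) (F F' : {set E}) : W' \subset W -> F' \subset F -> earc W' K F' -> earc W K F.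
Proof.
move=> sW sF; have sR : #|W' :\: K| <= #|W :\: K| by apply/subset_leq_card/setSD.
case=> [[c [Hc Hs]]|[x [y [w [Hx Hy Hxy Hw /andP[Ha Hp]]]]]].
  by left; exists c; split => //; apply: leq_trans Hs _.
right; exists x, y, w; split => //; apply/andP; split.
  apply/allP => z /(allP Ha); apply/subsetP/setSD/sW.
apply: sub_path Hp => a b /existsP[e /andP[eF He]]; apply/existsP; exists e.
by rewrite (subsetP sF _ eF).
Qed.

Definition validp (R : {set V}) (F : {set E}) (s : seq V) :=
  [&& s != [::], uniq s, all (fun z => z \in R) s & pth (adjF F) s].

Lemma validp_size (R : {set V}) (F : {set E}) (s : seq V) : validp R F s -> size s <= #|R|.
Proof.
case/and4P => _ Hu Ha _; rewrite -(card_uniqP Hu); apply: subset_leq_card.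
by apply/subsetP => z; move/allP: Ha; apply.
Qed.

Lemma end_lemma (W K : {set V}) (F : {set E}) (s : seq V) (x0 f : V) :
  (forall e, e \in F -> ((ends e).1 \in W) && ((ends e).2 \in W)) ->
  (forall u, u \in W :\: K -> 1 < #|F :&: inc u|) ->
  validp (W :\: K) F s -> (forall s', validp (W :\: K) F s' -> size s' <= size s) ->
  (forall s1 o, s = s1 ++ [:: o; last x0 s] -> o = f) ->
  (exists o, [/\ o != f, adjF F (last x0 s) o & o \in K]) \/
  (exists c, goodcyc c /\ size c <= #|W :\: K|.+1).
Proof.
move=> HF Hdeg Hv Hmax Hf.
have zR : last x0 s \in W :\: K.
  case/and4P: Hv; case: s {Hmax Hf} => [|a p] // _ _ /allP Ha _; apply: Ha; exact: (mem_last a p).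
have [o1 [o2 [Hne A1 A2]]] := two_nbrs (Hdeg _ zR).
have [o [Hof Ao]] : exists o, o != f /\ adjF F (last x0 s) o.
  case: (eqVneq o1 f) => [E1|N1]; [exists o2; rewrite -E1 eq_sym | exists o1]; by split.
have Hsz := validp_size Hv.
case: (boolP (o \in s)) => Hos.
  right; move: Hv Hmax Hf Ao Hsz; case/splitPr: Hos => s1 s2 Hv Hmax Hf Ao Hsz.
  move: Ao; rewrite last_cat /=.
  case: s2 => [|z1 s2] in Hv Hmax Hf Hsz *; first by rewrite /= (negbTE (noadj_self _ _)).
  case: s2 => [|z2 s2] in Hv Hmax Hf Hsz * => Ao.
    by move: Hof; rewrite (Hf s1 o) ?eqxx // last_cat.
  exists [:: o, z1, z2 & s2]; split; last first.
    by apply: leqW; apply: leq_trans _ Hsz; rewrite size_cat leq_addl.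
  case/and4P: Hv => _; rewrite cat_uniq => /and3P[_ _ Hu] _ Hp.
  apply/and3P; split => //.
  have Hp2 : path adj o [:: z1, z2 & s2] := sub_path (@adjF_adj F) (pth_catr Hp).
  have Hl : adj (last o [:: z1, z2 & s2]) o := adjF_adj Ao.
  by change (path adj o (rcons [:: z1, z2 & s2] o)); rewrite rcons_path Hp2 Hl.
case: (boolP (o \in W :\: K)) => HoR.
  have Hv' : validp (W :\: K) F (rcons s o).
    case/and4P: Hv => Hn Hu Ha Hp; rewrite /validp rcons_uniq Hos Hu all_rcons HoR Ha.
    case: s {Hmax Hf Hsz zR Hn Hu Ha A1 A2 Hos} Hp Ao => [|a p] //= Hp Ao.
    by rewrite rcons_path Hp Ao.
  by have := Hmax _ Hv'; rewrite size_rcons ltnn.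
left; exists o; split => //.
case/andP: (adjF_in HF Ao) => _ HoW; move: HoR; rewrite !inE HoW andbT.
by move/negPn.
Qed.

Lemma ear (K : {set V}) n : forall (W : {set V}) (F : {set E}), #|W :\: K| = n ->
  (forall e, e \in F -> ((ends e).1 \in W) && ((ends e).2 \in W)) ->
  #|W :\: K| < #|F| -> earc W K F.
Proof.
elim/ltn_ind: n => n IH W F Hn HF Hlt.
case: (boolP [exists e in F, ((ends e).1 \in K) && ((ends e).2 \in K)]).
  case/existsP => e /and3P[eF h1 h2]; right; exists (ends e).1, (ends e).2, [::].
  split => //.
  rewrite /= andbT; apply/existsP; exists e; rewrite eF /joins.
  by case: (ends e) => a b; rewrite eqxx.
move/existsPn => HA.
case: (boolP [exists u in W :\: K, #|F :&: inc u| <= 1]).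
  case/existsP => u /andP[uR hu].
  have eD : (W :\ u) :\: K = (W :\: K) :\ u.
    by rewrite !setDDl setUC.
  have Hc1 := cardsD1 u (W :\: K); rewrite uR in Hc1.
  have Hc2 := cardsID (inc u) F.
  apply: (earc_mono (W' := W :\ u) (F' := F :\: inc u)).
  - exact: subD1set.
  - exact: subsetDl.
  apply: (IH #|(W :\ u) :\: K|) => //.
  - by rewrite eD -Hn; lia.
  - move=> e; rewrite !inE => /andP[Hi eF]; move: Hi (HF e eF).
    by rewrite negb_or => /andP[-> ->].
  - rewrite eD; lia.
move/existsPn => HB.
have Hdeg : forall u, u \in W :\: K -> 1 < #|F :&: inc u|.
  by move=> u uR; have := HB u; rewrite uR /= ltnNge.
pose P j := [exists t : j.-tuple V, validp (W :\: K) F t].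
have exP : exists j, P j.
  have [e eF] : exists e, e \in F.
    by apply/card_gt0P; apply: leq_ltn_trans Hlt.
  have nk := HA e; rewrite eF /= in nk; case/andP: (HF e eF) => h1 h2.
  have [u uR] : exists u, u \in W :\: K.
    case: (boolP ((ends e).1 \in K)) => k1.
      by rewrite k1 /= in nk; exists (ends e).2; rewrite inE nk h2.
    by exists (ends e).1; rewrite inE k1 h1.
  exists 1; apply/existsP; exists [tuple u].
  by rewrite /validp /= uR.
have ubP : forall j, P j -> j <= #|V|.
  move=> j /existsP[t Ht]; rewrite -(size_tuple t).
  exact: leq_trans (validp_size Ht) (max_card _).
case: (ex_maxnP exP ubP) => j /existsP[t Ht] Hjmax.
have Hmax : forall s', validp (W :\: K) F s' -> size s' <= size t.
  move=> s' Hs'; rewrite size_tuple; apply: Hjmax.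
  by apply/existsP; exists (in_tuple s').
move: Ht Hmax; case: t => s /= _ Hv Hmax.
have Hsz := validp_size Hv.
case: s Hv Hmax Hsz => [|a p] Hv Hmax Hsz; first by case/and4P: Hv.
case: p Hv Hmax Hsz => [|b q] Hv Hmax Hsz.
  have Hf0 : forall f s1 o, [:: a] = s1 ++ [:: o; last a [:: a]] -> o = f.
    by move=> f s1 o /(congr1 size); rewrite size_cat /=; lia.
  case: (end_lemma HF Hdeg Hv Hmax (Hf0 a)) => [[o1 [_ A1 K1]]|]; last by left.
  case: (end_lemma HF Hdeg Hv Hmax (Hf0 o1)) => [[o2 [N2 A2 K2]]|]; last by left.
  right; exists o1, o2, [:: a]; split => //; first by rewrite eq_sym.
  case/and4P: Hv => _ _ -> _ /=; rewrite andbT A2 andbT.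
  by rewrite adjF_sym.
set s := [:: a, b & q] in Hv Hmax Hsz *.
have Hft : forall s1 o, s = s1 ++ [:: o; last a s] -> o = head a (behead (rev s)).
  by move=> s1 o ->; rewrite rev_cat /=.
have Hvr : validp (W :\: K) F (rev s).
  case/and4P: Hv => _ Hu Ha Hp; rewrite /validp rev_uniq Hu all_rev Ha pth_rev ?andbT.
    by rewrite /s rev_cons; case: (rev _).
  exact: adjF_sym.
have Hmaxr : forall s', validp (W :\: K) F s' -> size s' <= size (rev s).
  by move=> s' /Hmax; rewrite size_rev.
have Hlr : last a (rev s) = a by rewrite /s rev_cons last_rcons.
have Hfh : forall s1 o, rev s = s1 ++ [:: o; last a (rev s)] -> o = b.
  move=> s1 o /(congr1 rev); rewrite revK rev_cat Hlr /=.
  by rewrite /s => -[-> _].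
case: (end_lemma HF Hdeg Hv Hmax Hft) => [[oz [_ Az Kz]]|]; last by left.
case: (end_lemma HF Hdeg Hvr Hmaxr Hfh) => [[oa [_ Aa Ka]]|]; last by left.
rewrite Hlr in Aa.
have oa_s : oa \notin s.
  apply/negP => H; case/and4P: Hv => _ _ /allP /(_ _ H); by rewrite inE Ka.
case: (eqVneq oa oz) => [E1|N1].
  left; exists (oa :: s); split; last by rewrite /= ltnS.
  case/and4P: Hv => _ Hu _ Hp.
  apply/and3P; split => //; first by rewrite cons_uniq oa_s Hu.
  change (path adj oa (rcons s oa)); rewrite rcons_path; apply/andP; split.
    change (adj oa a && path adj a (b :: q)); apply/andP; split.
      by apply: (@adjF_adj F); rewrite adjF_sym.
    exact: sub_path (@adjF_adj F) _ _ Hp.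
  by apply: (@adjF_adj F); rewrite E1; exact: Az.
right; exists oa, oz, s; case/and4P: Hv => _ Hu Ha Hp; split => //.
have H1 : path (adjF F) oa s.
  by change (adjF F oa a && path (adjF F) a (b :: q)); rewrite adjF_sym Aa.
have H2 : adjF F (last oa s) oz by move: Az; rewrite /s /=.
by rewrite Ha rcons_path H1 H2.
Qed.

Lemma cyc_bound g x y a b : x != y -> uniq (x :: y :: a ++ b) ->
  pth adj (x :: rcons a y) -> pth adj (x :: rcons b y) -> (a != [::]) || (b != [::]) ->
  (forall s, goodcyc s -> g <= size s) -> g <= size a + size b + 2.
Proof.
move=> Hxy Hu Ha Hb Hne Hmin.
have -> : size a + size b + 2 = size (x :: a ++ y :: rev b) by rewrite /= size_cat /= size_rev; lia.
apply: Hmin; apply/and3P; split.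
- rewrite /= size_cat /= size_rev; case: a {Ha Hu} Hne => [|? ?]; case: b {Hb} => [|? ?] //=; lia.
- apply: (uniq_count Hu) => z; rewrite /= !count_cat /= count_rev; cnt_lia.
- change (pth adj (x :: rcons (a ++ y :: rev b) x)).
  rewrite rcons_cat rcons_cons -cat_cons pth_cat Ha /=; change (pth adj (y :: rcons (rev b) x)); rewrite -rev_pathform pth_rev //.
  exact: adjF_sym.
Qed.

Lemma subpath_of x y a s0 u t1 v t2 : x :: rcons a y = s0 ++ u :: t1 ++ v :: t2 ->
  pth adj (x :: rcons a y) -> pth adj (u :: rcons t1 v).
Proof.
move=> -> /pth_catr; rewrite -cat_cons -cat_rcons => /pth_catl.
by rewrite rcons_cons.
Qed.

Lemma caseI g x y a b c w x' y' :
  uniq (x :: y :: a ++ b ++ c ++ w) ->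
  pth adj (x :: rcons a y) -> pth adj (x :: rcons b y) -> pth adj (x :: rcons c y) ->
  pth adj (x' :: rcons w y') ->
  (b != [::]) || (c != [::]) ->
  x' \in x :: rcons a y -> y' \in x :: rcons a y -> x' != y' ->
  (forall s1 s2, w = [::] -> x :: rcons a y = s1 ++ x' :: y' :: s2 -> False) ->
  (forall s1 s2, w = [::] -> x :: rcons a y = s1 ++ y' :: x' :: s2 -> False) ->
  (forall s, goodcyc s -> g <= size s) ->
  #|V| + 3 <= 2 * g -> False.
Proof.
move=> Hu Pa Pb Pc Pw Hbc Hx' Hy' Hxy HQ1 HQ2 Hmin Hg.
have Hsz : size (x :: y :: a ++ b ++ c ++ w) <= #|V|.
  by rewrite -(card_uniqP Hu) max_card.
have Hxy0 : x != y by case/andP: Hu; rewrite inE negb_or => /andP[].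
move: #|V| Hsz Hg => N Hsz Hg.
have G1 : g <= size b + size c + 2.
  apply: (cyc_bound Hxy0) => //.
  apply: (uniq_count Hu) => z; rewrite /= !count_cat /= ?count_cat /=; cnt_lia.
have [s0 [s1 Ex]] := splitE Hx'.
have : y' \in s0 ++ x' :: s1 by rewrite -Ex.
rewrite mem_cat inE eq_sym (negbTE Hxy) /=.
case/orP.
  case/splitE => [t0 [t1 Es]].
  rewrite Es -catA /= in Ex.
  have Pt := subpath_of Ex Pa.
  have Pw' : pth adj (y' :: rcons (rev w) x') by rewrite -rev_pathform pth_rev //; exact: adjF_sym.
  have G2 : g <= size t1 + size (rev w) + 2.
    apply: (cyc_bound _ _ Pt Pw') => //; first by rewrite eq_sym.
      apply: (uniq_count Hu) => z; have := congr1 (count_mem z) Ex.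
      rewrite /= -cats1 !count_cat /= !count_cat /= count_rev; cnt_lia.
    apply/orP; case: (eqVneq t1 [::]) => [Et|]; last by left.
    right; case: (eqVneq w [::]) => [Ew|Nw]; first by exfalso; apply: (HQ2 t0 s1 Ew); rewrite Ex Et.
    by rewrite -size_eq0 size_rev size_eq0.
  have := congr1 size Ex; rewrite /= size_rcons !size_cat /= size_cat /=.
  move: Hsz G1 G2 Hg; rewrite /= !size_cat size_rev; sz_lia.
case/splitE => [t1 [t2 Es]].
rewrite Es in Ex.
have Pt := subpath_of Ex Pa.
have G2 : g <= size t1 + size w + 2.
  apply: (cyc_bound Hxy _ Pt Pw) => //.
    apply: (uniq_count Hu) => z; have := congr1 (count_mem z) Ex.
    rewrite /= -cats1 !count_cat /= !count_cat /=; cnt_lia.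
  apply/orP; case: (eqVneq t1 [::]) => [Et|]; last by left.
  right; case: (eqVneq w [::]) => [Ew|Nw] //; exfalso; apply: (HQ1 s0 t2 Ew); by rewrite Ex Et.
have := congr1 size Ex; rewrite /= size_rcons !size_cat /= size_cat /=.
move: Hsz G1 G2 Hg; rewrite /= !size_cat; sz_lia.
Qed.

Lemma caseII g x y a1 a2 b1 b2 c w x' y' :
  uniq (x :: y :: (a1 ++ x' :: a2) ++ (b1 ++ y' :: b2) ++ c ++ w) ->
  pth adj (x :: rcons (a1 ++ x' :: a2) y) -> pth adj (x :: rcons (b1 ++ y' :: b2) y) ->
  pth adj (x :: rcons c y) -> pth adj (x' :: rcons w y') ->
  (forall s, goodcyc s -> g <= size s) -> #|V| + 3 <= 2 * g -> False.
Proof.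
move=> Hu Pa Pb Pc Pw Hmin Hg.
have Hsz : size (x :: y :: (a1 ++ x' :: a2) ++ (b1 ++ y' :: b2) ++ c ++ w) <= #|V|.
  by rewrite -(card_uniqP Hu) max_card.
move: #|V| Hsz Hg => N Hsz Hg.
have Hxy0 : x != y by case/andP: Hu; rewrite inE negb_or => /andP[].
have Hx'y' : x' != y'.
  have : uniq [:: x'; y'] by apply: (uniq_count Hu) => z; rewrite /= !count_cat /= ?count_cat /=; cnt_lia.
  by rewrite /= inE andbT.
have sym := @adjF_sym [set: E].
move: Pa; rewrite rcons_cat rcons_cons -cat_cons pth_cat => /andP[Pa1 Pa2].
move: Pb; rewrite rcons_cat rcons_cons -cat_cons pth_cat => /andP[Pb1 Pb2].
have G3 : g <= size (a1 ++ x' :: a2) + size c + 2.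
  apply: (cyc_bound Hxy0) => //.
  - apply: (uniq_count Hu) => z; rewrite /= !count_cat /= ?count_cat /=; cnt_lia.
  - by rewrite rcons_cat rcons_cons -cat_cons pth_cat Pa1.
  - by case: (a1).
have G4 : g <= size (b1 ++ y' :: b2) + size c + 2.
  apply: (cyc_bound Hxy0) => //.
  - apply: (uniq_count Hu) => z; rewrite /= !count_cat /= ?count_cat /=; cnt_lia.
  - by rewrite rcons_cat rcons_cons -cat_cons pth_cat Pb1.
  - by case: (b1).
have G1 : g <= size (rev a1 ++ x :: b1) + size w + 2.
  apply: (cyc_bound Hx'y') => //.
  - apply: (uniq_count Hu) => z; rewrite /= !count_cat /= ?count_cat /= ?count_rev; cnt_lia.
  - rewrite rcons_cat rcons_cons -cat_cons pth_cat Pb1 andbT.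
    by change (pth adj (x' :: rcons (rev a1) x)); rewrite -rev_pathform pth_rev.
  - by case: (rev a1).
have G2 : g <= size (a2 ++ y :: rev b2) + size w + 2.
  apply: (cyc_bound Hx'y') => //.
  - apply: (uniq_count Hu) => z; rewrite /= !count_cat /= ?count_cat /= ?count_rev; cnt_lia.
  - rewrite rcons_cat rcons_cons -cat_cons pth_cat.
    have -> : rcons (x' :: a2) y = x' :: rcons a2 y by [].
    by rewrite Pa2 /=; change (pth adj (y :: rcons (rev b2) y')); rewrite -rev_pathform pth_rev.
  - by case: (a2).
move: Hsz G1 G2 G3 G4 Hg; rewrite /= !size_cat /= ?size_cat /= !size_rev; sz_lia.
Qed.

Lemma caseII' g x y a b c w x' y' :
  uniq (x :: y :: a ++ b ++ c ++ w) ->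
  pth adj (x :: rcons a y) -> pth adj (x :: rcons b y) ->
  pth adj (x :: rcons c y) -> pth adj (x' :: rcons w y') -> x' \in a -> y' \in b ->
  (forall s, goodcyc s -> g <= size s) -> #|V| + 3 <= 2 * g -> False.
Proof.
move=> Hu Pa Pb Pc Pw /splitE[a1 [a2 Ea]] /splitE[b1 [b2 Eb]].
subst a b; exact: (caseII Hu Pa Pb Pc Pw).
Qed.

Lemma geom g x y a b c w x' y' :
  uniq (x :: y :: a ++ b ++ c ++ w) ->
  pth adj (x :: rcons a y) -> pth adj (x :: rcons b y) -> pth adj (x :: rcons c y) ->
  pth adj (x' :: rcons w y') ->
  (a == [::]) + (b == [::]) + (c == [::]) <= 1 ->
  x' \in x :: y :: a ++ b ++ c -> y' \in x :: y :: a ++ b ++ c -> x' != y' ->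
  (forall p s1 s2, p \in [:: a; b; c] -> w = [::] -> x :: rcons p y = s1 ++ x' :: y' :: s2 -> False) ->
  (forall p s1 s2, p \in [:: a; b; c] -> w = [::] -> x :: rcons p y = s1 ++ y' :: x' :: s2 -> False) ->
  (forall s, goodcyc s -> g <= size s) -> #|V| + 3 <= 2 * g -> False.
Proof.
move=> Hu Pa Pb Pc Pw Hne Hx' Hy' Hxy HQ1 HQ2 Hmin Hg.
have Pw' : pth adj (y' :: rcons (rev w) x').
  by rewrite -rev_pathform pth_rev //; exact: adjF_sym.
have nbc : (b != [::]) || (c != [::]).
  by move: Hne; case: (a == [::]); case: (b == [::]); case: (c == [::]).
have nac : (a != [::]) || (c != [::]).
  by move: Hne; case: (a == [::]); case: (b == [::]); case: (c == [::]).
have nab : (a != [::]) || (b != [::]).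
  by move: Hne; case: (a == [::]); case: (b == [::]); case: (c == [::]).
have ma : a \in [:: a; b; c] by rewrite inE eqxx.
have mb : b \in [:: a; b; c] by rewrite !inE eqxx orbT.
have mc : c \in [:: a; b; c] by rewrite !inE eqxx !orbT.
have CIa : x' \in x :: rcons a y -> y' \in x :: rcons a y -> False.
  move=> h1 h2; apply: (caseI Hu Pa Pb Pc Pw nbc h1 h2 Hxy _ _ Hmin Hg).
    by move=> s1 s2; apply: HQ1 ma.
  by move=> s1 s2; apply: HQ2 ma.
have CIb : x' \in x :: rcons b y -> y' \in x :: rcons b y -> False.
  move=> h1 h2; apply: (caseI _ Pb Pa Pc Pw nac h1 h2 Hxy _ _ Hmin Hg).
  - apply: (uniq_count Hu) => z; rewrite /= !count_cat /=; cnt_lia.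
  - by move=> s1 s2; apply: HQ1 mb.
  - by move=> s1 s2; apply: HQ2 mb.
have CIc : x' \in x :: rcons c y -> y' \in x :: rcons c y -> False.
  move=> h1 h2; apply: (caseI _ Pc Pa Pb Pw nab h1 h2 Hxy _ _ Hmin Hg).
  - apply: (uniq_count Hu) => z; rewrite /= !count_cat /=; cnt_lia.
  - by move=> s1 s2; apply: HQ1 mc.
  - by move=> s1 s2; apply: HQ2 mc.
have Uw : forall p q r, uniq (x :: y :: p ++ q ++ r ++ w) -> uniq (x :: y :: p ++ q ++ r ++ rev w).
  move=> p q r Hu'; apply: (uniq_count Hu') => z; rewrite /= !count_cat /= count_rev; cnt_lia.
have Uab : uniq (x :: y :: a ++ c ++ b ++ w).
  apply: (uniq_count Hu) => z; rewrite /= !count_cat /=; cnt_lia.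
have Ubc : uniq (x :: y :: b ++ c ++ a ++ w).
  apply: (uniq_count Hu) => z; rewrite /= !count_cat /=; cnt_lia.
have Uba : uniq (x :: y :: b ++ a ++ c ++ w).
  apply: (uniq_count Hu) => z; rewrite /= !count_cat /=; cnt_lia.
have Ucb : uniq (x :: y :: c ++ b ++ a ++ w).
  apply: (uniq_count Hu) => z; rewrite /= !count_cat /=; cnt_lia.
have Uca : uniq (x :: y :: c ++ a ++ b ++ w).
  apply: (uniq_count Hu) => z; rewrite /= !count_cat /=; cnt_lia.
have mr : forall z p, z \in p -> z \in x :: rcons p y.
  by move=> z p h; rewrite inE mem_rcons inE h !orbT.
have mx : forall p, x \in x :: rcons p y by move=> p; rewrite inE eqxx.
have my : forall p, y \in x :: rcons p y by move=> p; rewrite inE mem_rcons inE eqxx orbT.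
move: Hx' Hy'; rewrite !inE !mem_cat.
case/or3P => [/eqP E1|/eqP E1|].
- case/or3P => [/eqP E2|/eqP E2|]; subst.
  + by apply: CIa; rewrite mx.
  + by apply: CIa; rewrite ?mx ?my.
  + by case/or3P => h; [apply: CIa | apply: CIb | apply: CIc]; rewrite ?mx ?(mr _ _ h).
- case/or3P => [/eqP E2|/eqP E2|]; subst.
  + by apply: CIa; rewrite ?mx ?my.
  + by apply: CIa; rewrite ?my.
  + by case/or3P => h; [apply: CIa | apply: CIb | apply: CIc]; rewrite ?my ?(mr _ _ h).
case/or3P => h1; case/or3P => [/eqP E2|/eqP E2|]; try subst.
- by apply: CIa; rewrite ?mx ?(mr _ _ h1).
- by apply: CIa; rewrite ?my ?(mr _ _ h1).
- case/or3P => h2.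
  + by apply: CIa; rewrite ?(mr _ _ h1) ?(mr _ _ h2).
  + exact: (caseII' Hu Pa Pb Pc Pw h1 h2 Hmin Hg).
  + exact: (caseII' Uab Pa Pc Pb Pw h1 h2 Hmin Hg).
- by apply: CIb; rewrite ?mx ?(mr _ _ h1).
- by apply: CIb; rewrite ?my ?(mr _ _ h1).
- case/or3P => h2.
  + exact: (caseII' (Uw _ _ _ Hu) Pa Pb Pc Pw' h2 h1 Hmin Hg).
  + by apply: CIb; rewrite ?(mr _ _ h1) ?(mr _ _ h2).
  + exact: (caseII' Ubc Pb Pc Pa Pw h1 h2 Hmin Hg).
- by apply: CIc; rewrite ?mx ?(mr _ _ h1).
- by apply: CIc; rewrite ?my ?(mr _ _ h1).
- case/or3P => h2.
  + exact: (caseII' (Uw _ _ _ Uab) Pa Pc Pb Pw' h2 h1 Hmin Hg).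
  + exact: (caseII' (Uw _ _ _ Ubc) Pb Pc Pa Pw' h2 h1 Hmin Hg).
  + by apply: CIc; rewrite ?(mr _ _ h1) ?(mr _ _ h2).
Qed.

Definition coreP (ps : seq (V * V)) : {set E} := [set e | has (fun pr => joins e pr.1 pr.2) ps].

Lemma coreP_card ps : #|coreP ps| <= size ps.
Proof.
elim: ps => [|[a b] ps IH].
  by rewrite leqn0 cards_eq0; apply/eqP/setP => e; rewrite !inE.
have -> : coreP ((a, b) :: ps) = [set e | joins e a b] :|: coreP ps.
  by apply/setP => e; rewrite !inE.
apply: leq_trans (leq_card_setU _ _) _ => /=.
rewrite -add1n leq_add //; apply/card_le1_eqP => e1 e2; rewrite !inE => h1 h2.
exact: (nopar h2 h1).
Qed.

Lemma coreP_mem ps e a b : joins e a b -> (a, b) \in ps -> e \in coreP ps.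
Proof. by move=> He Hab; rewrite inE; apply/hasP; exists (a, b). Qed.

Lemma step2 g x y c1 d1 d2 u :
  #|V| + 2 <= #|E| -> (forall s, goodcyc s -> g <= size s) -> #|V| + 3 <= 2 * g ->
  goodcyc (c1 ++ x :: d1 ++ y :: d2) -> size (c1 ++ x :: d1 ++ y :: d2) = g ->
  uniq u -> all (fun z => z \notin c1 ++ x :: d1 ++ y :: d2) u ->
  path (adjF (~: coreP (pairsOf ((c1 ++ x :: d1 ++ y :: d2) ++ take 1 (c1 ++ x :: d1 ++ y :: d2)))))
    x (rcons u y) -> False.
Proof.
move=> Hm Hmin Hg Hc Hsc Hu Hd HP.
set c := c1 ++ x :: d1 ++ y :: d2 in Hc Hsc Hd HP.
case/and3P: Hc => Hc3 Huc Hcyc.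
set b := rev (d2 ++ c1).
have sym := @adjF_sym [set: E].
have Hcyc' : pth adj (x :: d1 ++ y :: rcons (d2 ++ c1) x).
  move: Hcyc; rewrite -(rot_cycle (size c1)) /c rot_size_cat /=.
  by rewrite -catA /= rcons_cat.
move: Hcyc'; rewrite -cat_cons pth_cat => /andP[Pa Pb'].
have Pb : pth adj (x :: rcons b y) by rewrite /b -rev_pathform pth_rev.
have Pu : pth adj (x :: rcons u y) := sub_path (@adjF_adj _) HP.
have Hsc' : g = size c1 + size d1 + size d2 + 2.
  by rewrite -Hsc /c size_cat /= size_cat /=; lia.
have Hcu : uniq (c ++ u).
  rewrite cat_uniq Huc Hu andbT -all_predC; apply/allP => z /(allP Hd) /=.
  by rewrite /c.
have HK2 : #|[set z in c ++ u]| = size c + size u by rewrite cardsE (card_uniqP Hcu) size_cat.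
have HK2c : #|[set: V] :\: [set z in c ++ u]| = #|V| - (size c + size u).
  by rewrite setTD -HK2 -(cardsC [set z in c ++ u]) addKn.
have HVcu : size c + size u <= #|V| by rewrite -HK2 max_card.
set core2 := coreP (pairsOf (x :: rcons d1 y) ++ pairsOf (x :: rcons b y) ++ pairsOf (x :: rcons u y)).
have Hcore2 : #|core2| <= size c + size u + 1.
  apply: leq_trans (coreP_card _) _.
  rewrite !size_cat !size_pairsOf /= !size_rcons /b size_rev !size_cat /= ?size_cat /=; sz_lia.
have HF2c : #|~: core2| = #|E| - #|core2| by rewrite -(cardsC core2) addKn.
have := ear (erefl #|[set: V] :\: [set z in c ++ u]|) (F := ~: core2) _ _.
case.
- by move=> e _; rewrite !in_setT.
- rewrite HK2c HF2c; move: Hm Hcore2 HVcu Hsc; sz_lia.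
- case=> s [Hs Hss]; have := Hmin s Hs; move: Hss; rewrite HK2c.
  move: Hg Hsc HVcu; sz_lia.
case=> x' [y' [w [Hx' Hy' Hxy Hw /andP[Hwa HQ]]]].
have Hperm : perm_eq (c ++ u) (x :: y :: d1 ++ b ++ u).
  apply/permP => p; rewrite /c /b /= !count_cat /= !count_cat /= count_rev ?count_cat /=; cnt_lia.
have Hcuw : uniq (c ++ u ++ w).
  rewrite catA cat_uniq Hcu Hw andbT -all_predC; apply/allP => z /(allP Hwa).
  by rewrite !inE andbT.
have Hbig : uniq (x :: y :: d1 ++ b ++ u ++ w).
  apply: (uniq_count Hcuw) => z.
  rewrite /c /b /= !count_cat /= !count_cat /= count_rev ?count_cat /=; cnt_lia.
have HF1 : u = [::] -> exists e, e \notin coreP (pairsOf (c ++ take 1 c)) /\ joins e x y.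
  move=> Eu; move: HP; rewrite Eu /= andbT => /existsP[e /andP[eF He]].
  by exists e; split => //; rewrite inE in eF.
have Hn1 : ~~ ((d1 == [::]) && (b == [::])).
  apply/negP => /andP[/eqP E1 /eqP E2]; move: Hc3; rewrite /c E1 /=.
  have : size b = 0 by rewrite E2.
  by rewrite /b size_rev size_cat => /eqP; rewrite addn_eq0 !size_eq0 => /andP[/eqP-> /eqP->].
have Hn2 : u = [::] -> (d1 != [::]) && (b != [::]).
  move=> Eu; have [e [eF He]] := HF1 Eu; apply/andP; split; apply/negP => /eqP E1.
    apply: (negP eF); apply: (coreP_mem He).
    by rewrite /c E1 /= -catA /=; apply: pairs_mem.
  have : size b = 0 by rewrite E1.
  rewrite /b size_rev size_cat => /eqP; rewrite addn_eq0 !size_eq0 => /andP[/eqP E3 /eqP E4].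
  apply: (negP eF); apply: (coreP_mem (a := y) (b := x)); first by rewrite joinsC.
  rewrite /c E3 E4 /= take0 -catA /=.
  exact: (pairs_mem (x :: d1) [::]).
have Hne : (d1 == [::]) + (b == [::]) + (u == [::]) <= 1.
  move: Hn1 Hn2; case: (d1 == [::]); case: (b == [::]); case: (eqVneq u [::]) => // -> /=.
  by move=> _ /(_ erefl).
  by move=> _ /(_ erefl).
apply: (geom Hbig Pa Pb Pu (sub_path (@adjF_adj _) HQ) Hne _ _ Hxy _ _ Hmin Hg).
- by rewrite -(perm_mem Hperm); move: Hx'; rewrite inE.
- by rewrite -(perm_mem Hperm); move: Hy'; rewrite inE.
- move=> p s1 s2 Hp Ew Ep; move: HQ; rewrite Ew /= andbT => /existsP[e /andP[eF He]].
  rewrite inE in eF; apply: (negP eF); apply: (coreP_mem He).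
  rewrite !mem_cat; rewrite !inE in Hp.
  by case/or3P: Hp => /eqP Ep'; subst p; rewrite Ep pairs_mem ?orbT.
- move=> p s1 s2 Hp Ew Ep; move: HQ; rewrite Ew /= andbT => /existsP[e /andP[eF He]].
  rewrite inE in eF; apply: (negP eF); apply: (coreP_mem (a := y') (b := x')).
    by rewrite joinsC.
  rewrite !mem_cat; rewrite !inE in Hp.
  by case/or3P: Hp => /eqP Ep'; subst p; rewrite Ep pairs_mem ?orbT.
Qed.

Lemma core_main : #|V| + 2 <= #|E| -> exists s, goodcyc s /\ 2 * size s <= #|V| + 2.
Proof.
move=> Hm.
pose P k := [exists t : k.-tuple V, goodcyc t].
have exP : exists k, P k.
  have := ear (K := set0) (erefl #|[set: V] :\: set0|) (F := [set: E]) _ _.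
  case.
  - by move=> e _; rewrite !in_setT.
  - by rewrite setD0 !cardsT; move: Hm; sz_lia.
  - by case=> s [Hs _]; exists (size s); apply/existsP; exists (in_tuple s).
  - by case=> x [y [w [Hx _]]]; rewrite inE in Hx.
case: (ex_minnP exP) => g /existsP[t Ht] Hgmin.
have Hmin : forall s, goodcyc s -> g <= size s.
  by move=> s Hs; apply: Hgmin; apply/existsP; exists (in_tuple s).
case: (leqP (2 * g) (#|V| + 2)) => Hg.
  by exists t; rewrite size_tuple.
exfalso.
have {}Hg : #|V| + 3 <= 2 * g by move: Hg; sz_lia.
have [c [Hc Hsc]] : exists c, goodcyc c /\ size c = g by exists t; rewrite size_tuple.
clear t Ht.
case/and3P: (Hc) => Hc3 Huc _.
set F1 := ~: coreP (pairsOf (c ++ take 1 c)).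
have Hcore1 : #|coreP (pairsOf (c ++ take 1 c))| <= g.
  apply: leq_trans (coreP_card _) _; rewrite size_pairsOf size_cat Hsc.
  have Ht1 : size (take 1 c) <= 1 by rewrite size_take; case: ltnP.
  have [t Et] : exists t, size (take 1 c) = t by eexists.
  rewrite Et in Ht1 *.
  by case: t Ht1 {Et} => [|[|t]] // _; rewrite ?addn0 ?addn1 //= leq_pred.
have HK1 : #|[set z in c]| = g by rewrite cardsE (card_uniqP Huc).
have HK1c : #|[set: V] :\: [set z in c]| = #|V| - g.
  by rewrite setTD -HK1 -(cardsC [set z in c]) addKn.
have HVc : g <= #|V| by rewrite -HK1 max_card.
have HF1c : #|F1| = #|E| - #|coreP (pairsOf (c ++ take 1 c))|.
  by rewrite -(cardsC (coreP (pairsOf (c ++ take 1 c)))) addKn.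
have := ear (erefl #|[set: V] :\: [set z in c]|) (F := F1) _ _.
case.
- by move=> e _; rewrite !in_setT.
- rewrite HK1c HF1c; move: Hm Hcore1 HVc; sz_lia.
- case=> s [Hs Hss]; have := Hmin s Hs; move: Hss; rewrite HK1c; move: Hg HVc; sz_lia.
case=> x [y [u [Hx Hy Hxy Hu /andP[Hua HP]]]].
rewrite !inE in Hx Hy.
have Hd : all (fun z => z \notin c) u.
  by apply/allP => z /(allP Hua); rewrite !inE andbT.
have [[c1 [d1 [d2 Ec]]]|[c1 [d1 [d2 Ec]]]] := split2 Hx Hy Hxy.
  subst c; exact: (step2 Hm Hmin Hg Hc Hsc Hu Hd HP).
subst c; apply: (step2 Hm Hmin Hg Hc Hsc _ _ (u := rev u)).
- by rewrite rev_uniq.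
- by rewrite all_rev.
- change (pth (adjF F1) (y :: rcons (rev u) x)).
  by rewrite -rev_pathform pth_rev //; exact: adjF_sym.
Qed.

End Core.

Theorem lemma3p3 (V E : finType) (ends : E -> V * V) :
  #|V| + 2 <= #|E| ->
  exists k : nat, 2 * k <= #|V| + 2 /\ has_cycle_of_length ends k.
Proof.
move=> Hm.
case: (boolP [exists e, (ends e).1 == (ends e).2]) => [/existsP[e He]|Hnl].
  exists 1; split; first by rewrite addnC leq_addr.
  split => //; exists (fun _ => (ends e).1), (fun _ => e); split; [|split].
  - by move=> i j _; rewrite (ord1 i) (ord1 j).
  - by move=> i j _; rewrite (ord1 i) (ord1 j).
  - by move=> i; rewrite /joins; case: (ends e) He => a b /= /eqP ->; rewrite eqxx.
case: (boolP [exists e, exists e', (e != e') && joins ends e' (ends e).1 (ends e).2]).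
  case/existsP => e /existsP[e' /andP[Hne Hj]].
  have Hab : (ends e).1 != (ends e).2 by move/existsPn: Hnl => /(_ e).
  have H2 : 1 < #|V| by apply/card_gt1P; exists (ends e).1, (ends e).2.
  exists 2; split; first by move: H2; clear; lia.
  split => //.
  exists (fun i : 'I_2 => nth (ends e).1 [:: (ends e).1; (ends e).2] i).
  exists (fun i : 'I_2 => nth e [:: e; e'] i); split; [|split].
  - move=> i j /eqP; rewrite nth_uniq /=; [by move/eqP/val_inj | exact: ltn_ord | exact: ltn_ord |].
    by rewrite inE andbT.
  - move=> i j /eqP; rewrite nth_uniq /=; [by move/eqP/val_inj | exact: ltn_ord | exact: ltn_ord |].
    by rewrite inE andbT.
  - case=> [[|[|i]] Hi] //=.
      by rewrite /joins -surjective_pairing eqxx.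
    by rewrite joinsC.
move=> Hnp.
have noloop : forall e, (ends e).1 != (ends e).2 by move/existsPn: Hnl.
have nopar : forall e e' x y, joins ends e x y -> joins ends e' x y -> e = e'.
  move=> e e' x y He He'; case: (eqVneq e e') => // Hne; exfalso.
  move/existsPn: Hnp => /(_ e) /existsPn /(_ e'); rewrite Hne /=.
  move: He He'; rewrite /joins => /orP[] /eqP -> He' /=; [by rewrite He' | by rewrite orbC He'].
have [s [Hs Hsz]] := core_main noloop nopar Hm.
by exists (size s); split => //; exact: goodcyc_has.
Qed.
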